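(* Let $E/F$ be a quadratic extension of fields of characteristic $0$ and let $\gamma\in\mathrm{GL}_n(E)$ be normal with $\bar\gamma\gamma$ regular semisimple. Then $T_\gamma=\{g\in\mathrm{GL}_n(E):g^{-1}\gamma\bar g=\gamma\}$ is contained in $\mathrm{GL}_n(F)$ and in fact equals the centralizer of $\bar\gamma\gamma$ in $\mathrm{GL}_n(F)$.
   Context: $x\mapsto\bar x$ denotes the nontrivial automorphism of $E/F$ applied entrywise. $\gamma$ is normal if $\bar\gamma\gamma\in\mathrm{GL}_n(F)$. *)

(* Defs.v *)
From HB Require Import structures.
From mathcomp Require Import all_boot all_order all_algebra all_field.
Set Implicit Arguments. Unset Strict Implicit. Unset Printing Implicit Defensive.
Import GRing.Theory.
Local Open Scope ring_scope.

(* A square matrix over a field is regular semisimple when its characteristic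
   polynomial is separable (n distinct eigenvalues over an algebraic closure). *)
Definition regular_semisimple (K : fieldType) (n : nat) (A : 'M[K]_n) : Prop :=
  separable_poly (char_poly A).

(* The E-matrix g lies in GL_n(F): invertible with all entries in F (= 1%VS). *)
Definition in_GLF (F : fieldType) (E : fieldExtType F) (n : nat) (g : 'M[E]_n) : Prop :=
  g \in unitmx /\ forall i j, g i j \in (1%VS : {vspace E}).

Definition mx_bar (F : fieldType) (E : fieldExtType F) (s : E -> E) (n : nat)
  (A : 'M[E]_n) : 'M[E]_n := map_mx s A.

Definition is_normal (F : fieldType) (E : fieldExtType F) (s : E -> E) (n : nat)
  (gam : 'M[E]_n) : Prop :=
  gam \in unitmx /\ in_GLF (mx_bar s gam *m gam).

Definition T_gamma (F : fieldType) (E : fieldExtType F) (s : E -> E) (n : nat)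
  (gam : 'M[E]_n) (g : 'M[E]_n) : Prop :=
  g \in unitmx /\ invmx g *m gam *m mx_bar s g = gam.

Definition centralizer_GLF (F : fieldType) (E : fieldExtType F) (n : nat)
  (A : 'M[E]_n) (g : 'M[E]_n) : Prop :=
  in_GLF g /\ g *m A = A *m g.

(* Main.v *)
Require Import Defs.
From HB Require Import structures.
From mathcomp Require Import all_boot all_order all_algebra all_field.
From Stdlib Require Import Classical.
Import GRing.Theory.
Local Open Scope ring_scope.

Module Helpers.
Set Implicit Arguments. Unset Strict Implicit. Unset Printing Implicit Defensive.

Lemma irr_factor (K : fieldType) (p : {poly K}) : p \is monic -> (1 < size p)%N ->
  exists q : {poly K}, [/\ irreducible_poly q, q \is monic & q %| p].
Proof.
have [n] := ubnP (size p); elim: n p => // n IH p Hs Hm Hp.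
case: (classic (irreducible_poly p)) => Hirr; first by exists p.
have [q Hq] : exists q : {poly K}, ~ (size q != 1 -> q %| p -> q %= p).
  apply: not_all_ex_not => H; apply: Hirr; split => // q; exact: H.
case: (classic (size q != 1)) => Hq1; last by exfalso; apply: Hq => /Hq1.
case: (classic (q %| p)) => Hqp; last by exfalso; apply: Hq => _ /Hqp.
have qn0 : q != 0.
  by apply: contraTneq Hqp => ->; rewrite dvd0p -size_poly_eq0 -lt0n (ltn_trans _ Hp).
have sqp : (size q < size p)%N.
  rewrite ltn_neqAle dvdp_leq ?andbT ?monic_neq0 //.
  by rewrite dvdp_size_eqp //; apply/negP => H; apply: Hq => _ _.
have sq1 : (1 < size q)%N.
  by move: Hq1; rewrite ltn_neqAle eq_sym => ->; rewrite size_poly_gt0.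
set q' := (lead_coef q)^-1 *: q.
have lq : lead_coef q != 0 by rewrite lead_coef_eq0.
have q'm : q' \is monic by rewrite monicE lead_coefZ mulVf.
have sq' : size q' = size q by rewrite size_scale // invr_eq0.
have [||r [r1 r2 r3]] := IH q' _ q'm; rewrite ?sq' //.
  exact: leq_trans sqp Hs.
exists r; split => //; apply: dvdp_trans r3 _; by rewrite dvdpZl ?invr_eq0.
Qed.
Lemma root_ext (K : fieldType) (p : {poly K}) : p \is monic -> (1 < size p)%N ->
  exists (L : fieldType) (f : {rmorphism K -> L}) (a : L), root (map_poly f p) a.
Proof.
move=> Hm Hp; have [q [qi qm qp]] := irr_factor Hm Hp.
pose hI : monic_irreducible_poly q := (qi, qm).
pose L : fieldType := {poly %/ q with hI}.
pose f : {rmorphism K -> L} := qpolyC q.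
exists L, f, (in_qpoly q 'X).
have /dvdpP [r ->] := qp.
rewrite rmorphM /= rootM; apply/orP; right.
rewrite /root.
have -> : (map_poly f q).[in_qpoly q 'X] = (map_poly (qpolyC q) q).[in_qpoly q 'X] by [].
rewrite -in_qpoly_comp_horner comp_polyXr.
apply/eqP/val_inj => /=.
rewrite mk_monicE //.
apply: Pdiv.CommonRing.rmodpp; exact: mulrC.
Qed.
Lemma split_ext (K : fieldType) (p : {poly K}) : p \is monic ->
  exists (L : fieldType) (f : {rmorphism K -> L}) (rs : seq L),
    map_poly f p = \prod_(r <- rs) ('X - r%:P).
Proof.
have [n] := ubnP (size p); elim: n K p => // n IH K p Hs Hm.
case: (leqP (size p) 1) => Hp.
  exists K, (idfun : {rmorphism K -> K}), [::]; rewrite big_nil.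
  have p1 : p = 1.
    have : size p = 1%N.
      by apply/eqP; rewrite eqn_leq Hp lt0n size_poly_eq0 monic_neq0.
    move/eqP/size_poly1P => [c _ pc]; move: Hm; rewrite pc monicE lead_coefC => /eqP ->.
    by [].
  by rewrite p1 rmorph1.
have [L1 [f1 [a Ha]]] := root_ext Hm Hp.
have /factor_theorem [p1 Hp1] := Ha.
have p1m : p1 \is monic.
  by rewrite -(monicMr _ (monicXsubC a)) -Hp1 monic_map.
have sp1 : size p = (size p1).+1.
  rewrite -(size_map_poly f1) Hp1 size_mul ?monic_neq0 ?monicXsubC //.
  by rewrite size_XsubC addn2.
have [|L2 [f2 [rs Hrs]]] := IH L1 p1 _ p1m.
  by rewrite -ltnS -sp1.
exists L2, (f2 \o f1)%FUN, (f2 a :: rs).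
rewrite map_poly_comp Hp1 rmorphM /= Hrs big_cons mulrC; congr (_ * _).
by rewrite rmorphB /= map_polyX map_polyC.
Qed.
Lemma char_poly_conj (L : fieldType) n (P D : 'M[L]_n) : P \in unitmx ->
  char_poly (invmx P *m D *m P) = char_poly D.
Proof.
move=> Pu; rewrite /char_poly /char_poly_mx.
have -> : ('X%:M - map_mx polyC (invmx P *m D *m P) : 'M[{poly L}]_n) =
   map_mx polyC (invmx P) *m ('X%:M - map_mx polyC D) *m map_mx polyC P.
  rewrite mulmxBr mulmxBl !map_mxM; congr (_ - _).
  rewrite scalar_mxC -mulmxA -map_mxM mulVmx // map_mx1 mulmx1 //.
rewrite !det_mulmx !det_map_mx mulrC mulrA -rmorphM /= -det_mulmx mulmxV //.
by rewrite det1 mul1r.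
Qed.

Lemma comm_diag (L : fieldType) n (A X Y : 'M[L]_n.+1) (rs : seq L) :
  uniq rs -> char_poly A = \prod_(r <- rs) ('X - r%:P) ->
  X *m A = A *m X -> Y *m A = A *m Y -> X *m Y = Y *m X.
Proof.
move=> urs Hc HX HY.
have : diagonalizable A.
  apply/diagonalizableP; exists rs => //; rewrite -Hc; exact: mxminpoly_dvd_char.
move=> [P Pu /(diagonalizable_forLR Pu) [D]] HA.
rewrite mxpoly.conjVmx // in HA.

have sepD : separable_poly (char_poly (diag_mx D)).
  by rewrite -(char_poly_conj (diag_mx D) Pu) -HA Hc separable_prod_XsubC.
have injD : injective (fun i => D 0 i).
  move: sepD; rewrite char_poly_trig //.
  have -> : \prod_(i < n.+1) ('X - ((diag_mx D) i i)%:P) =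
            \prod_(r <- [seq D 0 i | i <- enum 'I_n.+1]) ('X - r%:P).
    rewrite big_map big_enum /=; apply: eq_bigr => i _; by rewrite mxE eqxx.
  rewrite separable_prod_XsubC => u; apply/injectiveP; exact: u.
have diagC : forall Z : 'M[L]_n.+1, Z *m A = A *m Z ->
    P *m Z *m invmx P = diag_mx (\row_i (P *m Z *m invmx P) i i).
  move=> Z HZ; set M := P *m Z *m invmx P.
  have HM : M *m diag_mx D = diag_mx D *m M.
    have -> : diag_mx D = P *m A *m invmx P.
      by rewrite HA !mulmxA mulmxV // mul1mx -mulmxA mulmxV // mulmx1.
    have e1 : M *m (P *m A *m invmx P) = P *m (Z *m A) *m invmx P.
      by rewrite /M !mulmxA mulmxKV.
    have e2 : (P *m A *m invmx P) *m M = P *m (A *m Z) *m invmx P.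
      by rewrite /M !mulmxA mulmxKV.
    by rewrite e1 e2 HZ.
  apply/matrixP => i j; rewrite !mxE.
  case: (eqVneq i j) => [-> | ij]; first by rewrite mulr1n.
  rewrite mulr0n.
  move/matrixP: HM => /(_ i j).
  rewrite mul_mx_diag mul_diag_mx !mxE => /eqP.
  rewrite mulrC -subr_eq0 -mulrBl mulf_eq0 subr_eq0 => /orP [/eqP/injD e|/eqP -> //].
  by rewrite e eqxx in ij.
have eX := diagC X HX; have eY := diagC Y HY.
have -> : X = invmx P *m (P *m X *m invmx P) *m P.
  by rewrite !mulmxA mulVmx // mul1mx mulmxKV.
have -> : Y = invmx P *m (P *m Y *m invmx P) *m P.
  by rewrite !mulmxA mulVmx // mul1mx mulmxKV.
rewrite eX eY !mulmxA !mulmxK //.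
by rewrite -(mulmxA (invmx P)) diag_mx_comm mulmxA.
Qed.
Lemma comm_sep (K : fieldType) n (A X Y : 'M[K]_n) :
  separable_poly (char_poly A) ->
  X *m A = A *m X -> Y *m A = A *m Y -> X *m Y = Y *m X.
Proof.
case: n A X Y => [|n] A X Y sepA HX HY.
  by apply/matrixP => -[].
have [L [f [rs Hrs]]] := split_ext (char_poly_monic A).
apply: (@map_mx_inj _ _ f).
rewrite !map_mxM.
apply: (@comm_diag L n (map_mx f A) _ _ rs).
- by rewrite -separable_prod_XsubC -Hrs separable_map.
- by rewrite -map_char_poly.
- by rewrite -!map_mxM HX.
- by rewrite -!map_mxM HY.
Qed.
Section S.
Variables (F : fieldType) (E : fieldExtType F) (s : {rmorphism E -> E}).
Hypothesis s_fixF : forall a : F, s (a%:A) = a%:A.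

Lemma s_fix1 x : x \in (1%VS : {vspace E}) -> s x = x.
Proof. by move/vlineP => [k ->]; exact: s_fixF. Qed.

Lemma s_fixpoly (p : {poly E}) : p \is a polyOver (1%VS : {vspace E}) ->
  map_poly s p = p.
Proof.
move/polyOverP => Hp; apply/polyP => i; rewrite coef_map /=; exact: s_fix1.
Qed.

Hypothesis dimE : \dim {:E} = 2%N.

Lemma s_invol y : s (s y) = y.
Proof.
set q := minPoly 1 y.
have qE : map_poly s q = q by apply: s_fixpoly; exact: minPolyOver.
have r1 : root q y by exact: root_minPoly.
have r2 : root q (s y) by rewrite -qE rmorph_root.
have r3 : root q (s (s y)) by rewrite -qE rmorph_root.
have sq : (size q <= 3)%N.
  rewrite /q size_minPoly ltnS.
  have := dim_Fadjoin 1 y; rewrite dimv1 muln1 => <-.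
  by rewrite -dimE dimvS // subvf.
have q0 : q != 0 by rewrite -size_poly_gt0 size_minPoly.
have [e|n1] := eqVneq (s y) y; first by rewrite !e.
have [//|n2] := eqVneq (s (s y)) y.
have n3 : s (s y) != s y by apply: contra n1 => /eqP /fmorph_inj ->.
have := max_poly_roots q0 (rs := [:: y; s y; s (s y)]).
rewrite /= r1 r2 r3 /= => /(_ isT).
rewrite !inE !negb_or eq_sym n1 eq_sym n2 eq_sym n3 => /(_ isT).
by rewrite ltnNge sq.
Qed.

Hypothesis s_nontriv : exists x : E, s x != x.

Lemma s_fixed y : s y = y -> y \in (1%VS : {vspace E}).
Proof.
move=> sy; apply: contraT => yn1; case: s_nontriv => x /eqP [].

have : x \in <<1; y>>%VS.
  have -> : <<1; y>>%VS = fullv; last exact: memvf.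
  apply/eqP; rewrite eqEdim subvf /= dim_Fadjoin dimv1 muln1 dimE.
  by rewrite ltn_neqAle eq_sym adjoin_deg_eq1 yn1.
move/Fadjoin_polyP => [p Hp ->].
by rewrite -horner_map /= s_fixpoly // sy.
Qed.
End S.
End Helpers.
Import Helpers.

Theorem mainTheorem9 (F : fieldType) (E : fieldExtType F)
  (charF0 : [pchar F] =i pred0)
  (dimE : \dim {:E} = 2%N)
  (s : {rmorphism E -> E})
  (s_fixF : forall a : F, s (a%:A) = a%:A)
  (s_bij : bijective s)
  (s_nontriv : exists x : E, s x != x)
  (n : nat) (gam : 'M[E]_n)
  (gam_normal : is_normal s gam)
  (gam_rs : regular_semisimple (mx_bar s gam *m gam)) :
  (forall g : 'M[E]_n, T_gamma s gam g -> in_GLF g) /\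
  (forall g : 'M[E]_n, T_gamma s gam g <-> centralizer_GLF (mx_bar s gam *m gam) g).
Proof.
move: gam_normal gam_rs; rewrite /is_normal /regular_semisimple /T_gamma
  /centralizer_GLF /in_GLF /mx_bar.
set A := map_mx s gam *m gam => -[gu [Au AF]] sepA.
have bb : forall M : 'M[E]_n, map_mx s (map_mx s M) = M.
  by move=> M; apply/matrixP => i j; rewrite !mxE s_invol.
have bF : forall M : 'M[E]_n, (forall i j, M i j \in (1%VS : {vspace E})) ->
    map_mx s M = M.
  by move=> M HM; apply/matrixP => i j; rewrite !mxE s_fix1.
have bA : map_mx s A = A by apply: bF.
have A2 : gam *m map_mx s gam = A by rewrite -bA /A map_mxM bb.
have gA : gam *m A = A *m gam by rewrite {1}/A mulmxA A2.
have key : forall g : 'M[E]_n, g \in unitmx /\ invmx g *m gam *m map_mx s g = gam ->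
    map_mx s g = g /\ g *m A = A *m g.
  move=> g [gu' Hg].
  have H1 : gam *m map_mx s g = g *m gam.
    by rewrite -{2}Hg !mulmxA mulmxV // mul1mx.
  have H2 : map_mx s gam *m g = map_mx s g *m map_mx s gam.
    by have := congr1 (map_mx s) H1; rewrite !map_mxM bb.
  have bgA : map_mx s g *m A = A *m map_mx s g.
    by rewrite /A mulmxA -H2 -!mulmxA H1.
  have cg : gam *m map_mx s g = map_mx s g *m gam.
    exact: (comm_sep sepA).
  have eg : map_mx s g = g.
    by rewrite -(mulmxK gu (map_mx s g)) -cg H1 mulmxK.
  by split => //; rewrite -eg.
have P1 : forall g : 'M[E]_n, g \in unitmx /\ invmx g *m gam *m map_mx s g = gam ->
    g \in unitmx /\ (forall i j, g i j \in (1%VS : {vspace E})).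
  move=> g Hg; have [eg _] := key g Hg; split; first by case: Hg.
  move=> i j; apply: (s_fixed s_fixF dimE s_nontriv).
  by move/matrixP: eg => /(_ i j); rewrite mxE.
split => // g; split.
  by move=> Hg; split; [exact: P1 | have [] := key g Hg].
move=> [[gu' gF] gc].
split => //; rewrite bF //.
have cg : g *m gam = gam *m g by apply: (comm_sep sepA) => //.
by rewrite -mulmxA -cg mulKmx.
Qed.
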